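(* With the notation of the context, the Laurent polynomials $\varepsilon^\sigma_i[y;q^{-1}]:=e^\sigma_i[y;a^{-1},b^{-1},c^{-1},d^{-1}\mid q^{-1}]$ satisfy, for $1\le i\le D-1$, $$\varepsilon^+_{i-1}[y;q^{-1}]=\frac{ab(1-q^i)(1-cdq^{i-1})}{ab-1}\frac{(abcd;q)_{2i-1}}{a^i(q,bc,bd,cd;q)_i}\big(P_i-Q_i\big),$$ $$\varepsilon^-_i[y;q^{-1}]=\frac{(1-abq^i)(1-abcdq^{i-1})}{1-ab}\frac{(abcd;q)_{2i-1}}{a^i(q,bc,bd,cd;q)_i}\Big(P_i-\frac{ab(1-q^i)(1-cdq^{i-1})}{(1-abq^i)(1-abcdq^{i-1})}Q_i\Big),$$ and moreover $\varepsilon^-_0[y;q^{-1}]=1$ and $\varepsilon^+_{D-1}[y;q^{-1}]=\frac{(abcd;q)_{2D-1}}{a^D(q,bc,bd;q)_D(cd;q)_{D-1}}P_D$, where $P_i=P_i[y;a,b,c,d\mid q]$ and $Q_i=a^{-1}b^{-1}y^{-1}(1-ay)(1-by)P_{i-1}[y;aq,bq,c,d\mid q]$.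
   Context: $q\in\mathbb{C}^*$ is not a root of unity; for $p\in\mathbb{C}^*$, $(\alpha;p)_n=(1-\alpha)(1-\alpha p)\cdots(1-\alpha p^{n-1})$ and $(\alpha_1,\dots,\alpha_r;p)_n=\prod_k(\alpha_k;p)_n$. $\Gamma$ is a $Q$-polynomial distance-regular graph of diameter $D\ge3$ containing a Delsarte clique and of $q$-Racah type: relative to a fixed vertex, its Leonard system (adjacency matrix, dual adjacency matrix, primitive and dual primitive idempotents in the $Q$-polynomial ordering) has eigenvalues $\theta_i=\theta_0+h(1-q^i)(1-sq^{i+1})q^{-i}$, dual eigenvalues $\theta^*_i=\theta^*_0+h^*(1-q^i)(1-s^*q^{i+1})q^{-i}$, first split sequence $\varphi_i=hh^*q^{1-2i}(1-q^i)(1-q^{i-D-1})(1-r_1q^i)(1-r_2q^i)$ and second split sequence $\phi_i=hh^*q^{1-2i}(1-q^i)(1-q^{i-D-1})(r_1-s^*q^i)(r_2-s^*q^i)/s^*$, for nonzero $h,h^*,s,s^*,r_1,r_2$ with $r_1r_2=ss^*q^{D+1}$; none of $q^i,r_1q^i,r_2q^i,s^*q^i/r_1,s^*q^i/r_2$ equals $1$ for $1\le i\le D$, and neither $sq^i$ nor $s^*q^i$ equals $1$ for $2\le i\le 2D$. Square roots $q^{1/2},s^{1/2},s^{*1/2},r_1^{1/2},r_2^{1/2}$ are fixed with $r_1^{1/2}r_2^{1/2}=s^{1/2}s^{*1/2}q^{(D+1)/2}$, $q^{m/2}=(q^{1/2})^m$. Let $a=\frac{r_1^{1/2}r_2^{1/2}}{s^{*1/2}q^{D/2}}$,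 $b=\frac{s^{*1/2}}{r_1^{1/2}r_2^{1/2}q^{D/2}}$, $c=\frac{r_2^{1/2}s^{*1/2}q^{(D+2)/2}}{r_1^{1/2}}$, $d=\frac{r_1^{1/2}s^{*1/2}q^{(D+2)/2}}{r_2^{1/2}}$ (so $ab=q^{-D}$). For nonzero $\alpha,\beta,\gamma,\delta,p$: $P_i[y;\alpha,\beta,\gamma,\delta\mid p]=\frac{(\alpha\beta,\alpha\gamma,\alpha\delta;p)_i}{\alpha^i(\alpha\beta\gamma\delta p^{i-1};p)_i}\sum_{j=0}^i\frac{(p^{-i},\alpha\beta\gamma\delta p^{i-1},\alpha y,\alpha y^{-1};p)_j}{(\alpha\beta,\alpha\gamma,\alpha\delta,p;p)_j}p^j$, and (whenever denominators are nonzero) for $1\le i\le D-1$ $e^+_{i-1}[y;\alpha,\beta,\gamma,\delta\mid p]=\frac{\alpha\beta(1-p^i)(1-\gamma\delta p^{i-1})}{(\alpha\beta-1)(1-\alpha\beta\gamma\delta p^{2i-1})}\frac{(\alpha\beta\gamma\delta;p)_{2i}}{\alpha^i(p,\beta\gamma,\beta\delta,\gamma\delta;p)_i}\Big(P_i[y;\alpha,\beta,\gamma,\delta\mid p]-y(1-\alpha y^{-1})(1-\beta y^{-1})P_{i-1}[y;\alpha p,\beta p,\gamma,\delta\mid p]\Big)$, $e^-_i[y;\alpha,\beta,\gamma,\delta\mid p]=\frac{(1-\alpha\beta p^i)(1-\alpha\beta\gamma\delta p^{i-1})}{(1-\alpha\beta)(1-\alpha\beta\gamma\delta p^{2i-1})}\frac{(\alpha\beta\gamma\delta;p)_{2i}}{\alpha^i(p,\beta\gamma,\beta\delta,\gamma\delta;p)_i}\Big(P_i[y;\alpha,\beta,\gamma,\delta\mid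 p]-\frac{\alpha\beta(1-p^i)(1-\gamma\delta p^{i-1})}{(1-\alpha\beta p^i)(1-\alpha\beta\gamma\delta p^{i-1})}y(1-\alpha y^{-1})(1-\beta y^{-1})P_{i-1}[y;\alpha p,\beta p,\gamma,\delta\mid p]\Big)$, $e^-_0=1$, $e^+_{D-1}[y;\alpha,\beta,\gamma,\delta\mid p]=\frac{(\alpha\beta\gamma\delta;p)_{2D-1}}{\alpha^D(p,\beta\gamma,\beta\delta;p)_D(\gamma\delta;p)_{D-1}}P_D[y;\alpha,\beta,\gamma,\delta\mid p]$. *)

(* Defs.v *)
From mathcomp Require Import all_boot all_algebra.
From mathcomp Require Import complex Rstruct.
Set Implicit Arguments. Unset Strict Implicit. Unset Printing Implicit Defensive.
Import GRing.Theory.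
Local Open Scope ring_scope.

Definition C : fieldType := complex Rdefinitions.R.

Definition qpoch (x p : C) (n : nat) : C := \prod_(k < n) (1 - x * p ^+ k).

Definition Pw (i : nat) (y al be ga de p : C) : C :=
  qpoch (al * be) p i * qpoch (al * ga) p i * qpoch (al * de) p i
  / (al ^+ i * qpoch (al * be * ga * de * p ^+ i.-1) p i)
  * \sum_(j < i.+1)
      (qpoch (p ^- i) p j * qpoch (al * be * ga * de * p ^+ i.-1) p j
       * qpoch (al * y) p j * qpoch (al * y^-1) p j
       / (qpoch (al * be) p j * qpoch (al * ga) p j * qpoch (al * de) p j
          * qpoch p p j)
       * p ^+ j).

Definition efac (i : nat) (al be ga de p : C) : C :=
  qpoch (al * be * ga * de) p (2 * i)
  / (al ^+ i * (qpoch p p i * qpoch (be * ga) p i * qpoch (be * de) p i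
                * qpoch (ga * de) p i)).

Definition Rterm (i : nat) (y al be ga de p : C) : C :=
  y * (1 - al * y^-1) * (1 - be * y^-1) * Pw i.-1 y (al * p) (be * p) ga de p.

(* e^+_{i-1} for 1 <= i <= D-1 (generic formula) *)
Definition eplus_gen (i : nat) (y al be ga de p : C) : C :=
  al * be * (1 - p ^+ i) * (1 - ga * de * p ^+ i.-1)
  / ((al * be - 1) * (1 - al * be * ga * de * p ^+ (2 * i).-1))
  * efac i al be ga de p
  * (Pw i y al be ga de p - Rterm i y al be ga de p).

Definition eplus_top (D : nat) (y al be ga de p : C) : C :=
  qpoch (al * be * ga * de) p (2 * D).-1
  / (al ^+ D * (qpoch p p D * qpoch (be * ga) p D * qpoch (be * de) p D
                * qpoch (ga * de) p D.-1))
  * Pw D y al be ga de p.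

Definition eplus (D k : nat) (y al be ga de p : C) : C :=
  if k.+1 == D then eplus_top D y al be ga de p
  else eplus_gen k.+1 y al be ga de p.

Definition eminus_gen (i : nat) (y al be ga de p : C) : C :=
  (1 - al * be * p ^+ i) * (1 - al * be * ga * de * p ^+ i.-1)
  / ((1 - al * be) * (1 - al * be * ga * de * p ^+ (2 * i).-1))
  * efac i al be ga de p
  * (Pw i y al be ga de p
     - al * be * (1 - p ^+ i) * (1 - ga * de * p ^+ i.-1)
       / ((1 - al * be * p ^+ i) * (1 - al * be * ga * de * p ^+ i.-1))
       * Rterm i y al be ga de p).

Definition eminus (k : nat) (y al be ga de p : C) : C :=
  if k == 0%N then 1 else eminus_gen k y al be ga de p.

(* Main.v *)
Require Import Defs.
From mathcomp Require Import all_boot all_algebra.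
From mathcomp Require Import complex Rstruct.
From mathcomp Require Import ring zify.
Import GRing.Theory.
Local Open Scope ring_scope.

Lemma qpochS (x p : C) n : qpoch x p n.+1 = qpoch x p n * (1 - x * p ^+ n).
Proof. by rewrite /qpoch big_ord_recr. Qed.

Lemma qpoch0 (x p : C) : qpoch x p 0 = 1.
Proof. by rewrite /qpoch big_ord0. Qed.

Lemma binS2 n : 'C(n.+1, 2) = ('C(n, 2) + n)%N.
Proof. by rewrite binS bin1. Qed.

Lemma qpochV (x p : C) n : x != 0 -> p != 0 ->
  qpoch x^-1 p^-1 n = (-1) ^+ n / (x ^+ n * p ^+ 'C(n, 2)) * qpoch x p n.
Proof.
move=> hx hp; elim: n => [|n IH]; first by rewrite !qpoch0 bin0n !expr0; field.
rewrite !qpochS IH binS2 exprD !exprS exprVn.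
have h1 : x ^+ n != 0 by apply: expf_neq0.
have h2 : p ^+ n != 0 by apply: expf_neq0.
have h3 : p ^+ 'C(n, 2) != 0 by apply: expf_neq0.
field; by rewrite ?h1 ?h2 ?h3 ?hx ?hp.
Qed.

Lemma binT n : 'C(n.*2.+1, 2) = (4 * 'C(n, 2) + 3 * n)%N.
Proof. elim: n => [|n IH] //. rewrite doubleS binS2 binS2 IH binS2. rewrite -addnn. lia. Qed.

Lemma bin2dbl n : ('C(n, 2) + 'C(n, 2) = n.-1 * n)%N.
Proof. elim: n => [|n IH] //; rewrite binS2. have -> : (('C(n, 2) + n + ('C(n, 2) + n)) = ('C(n,2) + 'C(n,2)) + n + n)%N by lia. rewrite IH. case: n {IH} => [|n] //=. lia. Qed.

Lemma T2 (q : C) n : q ^+ 'C(n, 2) * q ^+ 'C(n, 2) = (q ^+ n.-1) ^+ n.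
Proof. by rewrite -exprD -exprM bin2dbl. Qed.

Lemma sgnsq n : (-1) ^+ n * (-1) ^+ n = 1 :> C.
Proof. by rewrite -exprMn mulrNN mulr1 expr1n. Qed.

Ltac nz := repeat (match goal with
  | |- is_true (_ * _ != 0) => apply: mulf_neq0
  | |- is_true (_ ^-1 != 0) => rewrite invr_eq0
  | |- is_true (_ ^+ _ != 0) => apply: expf_neq0
  | |- is_true (- _ != 0) => rewrite oppr_eq0
  end); try (done || exact: oner_neq0).

Ltac fz := repeat (apply/andP; split); nz.

Lemma PwV i (y a b c d q : C) : a != 0 -> b != 0 -> c != 0 -> d != 0 -> q != 0 -> y != 0 ->
  Pw i y a^-1 b^-1 c^-1 d^-1 q^-1 = Pw i y a b c d q.
Proof.
move=> ha hb hc hd hq hy; rewrite /Pw.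
have e4 : a^-1 * b^-1 * c^-1 * d^-1 * (q^-1) ^+ i.-1 = (a * b * c * d * q ^+ i.-1)^-1
  by rewrite exprVn !invfM.
have e1 : forall u v : C, u^-1 * v^-1 = (u * v)^-1 by move=> u v; rewrite invfM.
have e5 : a^-1 * y = (a * y^-1)^-1 by rewrite invfM invrK.
have e7 : (q^-1) ^- i = (q ^- i)^-1 by rewrite exprVn.
rewrite e4 e5 e7 !e1.
rewrite !qpochV; try by nz.
congr (_ * _).
  rewrite !invfM.
  set w := (qpoch (a * b * c * d * q ^+ i.-1) q i)^-1.
  rewrite !exprMn exprVn -T2.
  have ht : q ^+ 'C(i, 2) != 0 by nz.
  have hs : (-1) ^+ i != 0 :> C by nz.
  set R := (X in _ = X).
  rewrite -(mul1r R) -[1 * R](congr1 (fun z => z * R) (sgnsq i)) /R.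
  by field; fz.
apply: eq_bigr => j _.
rewrite !qpochV; try by nz.
clear e4 e7; case: i j => [|m] j.
  have -> : (j : nat) = 0%N by case: j => [[]].
  by rewrite !qpoch0 bin0n !expr0; field.
rewrite !invfM.
set w1 := (qpoch (a * b) q j)^-1.
set w2 := (qpoch (a * c) q j)^-1.
set w3 := (qpoch (a * d) q j)^-1.
set w4 := (qpoch q q j)^-1.
rewrite /= exprS !exprMn !exprVn !exprMn.
have ht : q ^+ 'C(j, 2) != 0 by nz.
have hs : (-1) ^+ j != 0 :> C by nz.
by field; fz.
Qed.

Lemma RtermV i (y a b c d q : C) : a != 0 -> b != 0 -> c != 0 -> d != 0 -> q != 0 -> y != 0 ->
  Rterm i y a^-1 b^-1 c^-1 d^-1 q^-1 =
  a^-1 * b^-1 * y^-1 * (1 - a * y) * (1 - b * y) * Pw i.-1 y (a * q) (b * q) c d q.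
Proof.
move=> ha hb hc hd hq hy; rewrite /Rterm -!invfM PwV; try by nz.
by field; fz.
Qed.

Lemma scal_gen m (a b c d q : C) : a != 0 -> b != 0 -> c != 0 -> d != 0 -> q != 0 ->
  a * b - 1 != 0 ->
  1 - a * b * c * d * q ^+ (2 * m.+1).-1 != 0 ->
  a^-1 * b^-1 * (1 - q^-1 ^+ m.+1) * (1 - c^-1 * d^-1 * q^-1 ^+ m.+1.-1)
  / ((a^-1 * b^-1 - 1) * (1 - a^-1 * b^-1 * c^-1 * d^-1 * q^-1 ^+ (2 * m.+1).-1))
  * efac m.+1 a^-1 b^-1 c^-1 d^-1 q^-1
  = a * b * (1 - q ^+ m.+1) * (1 - c * d * q ^+ m.+1.-1) / (a * b - 1)
    * (qpoch (a * b * c * d) q (2 * m.+1).-1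
       / (a ^+ m.+1 * (qpoch q q m.+1 * qpoch (b * c) q m.+1 * qpoch (b * d) q m.+1
                 * qpoch (c * d) q m.+1))).
Proof.
move=> ha hb hc hd hq hab hZ.
have e2 : ((2 * m.+1).-1 = m.*2.+1)%N by rewrite -mul2n mulnS.
rewrite /efac e2 in hZ *.
have -> : (2 * m.+1 = (m.*2.+1).+1)%N by rewrite -mul2n mulnS.
rewrite qpochS.
have e1 : forall u v : C, u^-1 * v^-1 = (u * v)^-1 by move=> u v; rewrite invfM.
rewrite !e1 !qpochV; try by nz.
have hC : q ^+ 'C(m.*2.+1, 2) = (q ^+ 'C(m, 2)) ^+ 4 * (q ^+ m) ^+ 3.
  by rewrite -!exprM -exprD binT; congr (_ ^+ _); lia.
rewrite hC binS2 exprD /=.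
rewrite !invfM.
set w1 := (qpoch q q m.+1)^-1.
set w2 := (qpoch (b * c) q m.+1)^-1.
set w3 := (qpoch (b * d) q m.+1)^-1.
set w4 := (qpoch (c * d) q m.+1)^-1.
set Z := qpoch (a * b * c * d) q m.*2.+1.
rewrite !exprS -!addnn !exprD sgnsq !exprMn !exprVn.
set L := (X in X = _).
rewrite -(mulr1 L) -[L * 1](congr1 (fun z => L * z) (sgnsq m)).
rewrite -(mulr1 (L * _)) -[L * _ * 1](congr1 (fun z => L * ((-1) ^+ m * (-1) ^+ m) * z) (sgnsq m)) /L.
have ht : q ^+ 'C(m, 2) != 0 by nz.
have hs : (-1) ^+ m != 0 :> C by nz.
have hqm : q ^+ m != 0 by nz.
have hZ' : a * b * c * d * (q * (q ^+ m * q ^+ m)) - 1 != 0.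
  by move: hZ; rewrite exprS -addnn exprD -oppr_eq0 opprB.
have hab' : 1 + -1 * (a * b) != 0 by rewrite mulN1r -oppr_eq0 opprD opprK addrC.
by field; fz.
Qed.

Lemma scal_genm m (a b c d q : C) : a != 0 -> b != 0 -> c != 0 -> d != 0 -> q != 0 ->
  a * b - 1 != 0 ->
  1 - a * b * c * d * q ^+ (2 * m.+1).-1 != 0 ->
  1 - a * b * q ^+ m.+1 != 0 ->
  1 - a * b * c * d * q ^+ m.+1.-1 != 0 ->
  (1 - a^-1 * b^-1 * q^-1 ^+ m.+1) * (1 - a^-1 * b^-1 * c^-1 * d^-1 * q^-1 ^+ m.+1.-1)
  / ((1 - a^-1 * b^-1) * (1 - a^-1 * b^-1 * c^-1 * d^-1 * q^-1 ^+ (2 * m.+1).-1))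
  * efac m.+1 a^-1 b^-1 c^-1 d^-1 q^-1
  = (1 - a * b * q ^+ m.+1) * (1 - a * b * c * d * q ^+ m.+1.-1) / (1 - a * b)
    * (qpoch (a * b * c * d) q (2 * m.+1).-1
       / (a ^+ m.+1 * (qpoch q q m.+1 * qpoch (b * c) q m.+1 * qpoch (b * d) q m.+1
                 * qpoch (c * d) q m.+1))).
Proof.
move=> ha hb hc hd hq hab hZ h1 h2.
have e2 : ((2 * m.+1).-1 = m.*2.+1)%N by rewrite -mul2n mulnS.
rewrite /efac e2 in hZ *.
have -> : (2 * m.+1 = (m.*2.+1).+1)%N by rewrite -mul2n mulnS.
rewrite qpochS.
have e1 : forall u v : C, u^-1 * v^-1 = (u * v)^-1 by move=> u v; rewrite invfM.
rewrite !e1 !qpochV; try by nz.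
have hC : q ^+ 'C(m.*2.+1, 2) = (q ^+ 'C(m, 2)) ^+ 4 * (q ^+ m) ^+ 3.
  by rewrite -!exprM -exprD binT; congr (_ ^+ _); lia.
rewrite hC binS2 exprD /= in h2 *.
rewrite !invfM.
set w1 := (qpoch q q m.+1)^-1.
set w2 := (qpoch (b * c) q m.+1)^-1.
set w3 := (qpoch (b * d) q m.+1)^-1.
set w4 := (qpoch (c * d) q m.+1)^-1.
set Z := qpoch (a * b * c * d) q m.*2.+1.
rewrite !exprS -!addnn !exprD sgnsq !exprMn !exprVn.
set L := (X in X = _).
rewrite -(mulr1 L) -[L * 1](congr1 (fun z => L * z) (sgnsq m)).
rewrite -(mulr1 (L * _)) -[L * _ * 1](congr1 (fun z => L * ((-1) ^+ m * (-1) ^+ m) * z) (sgnsq m)) /L.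
have ht : q ^+ 'C(m, 2) != 0 by nz.
have hs : (-1) ^+ m != 0 :> C by nz.
have hqm : q ^+ m != 0 by nz.
have hZ' : a * b * c * d * (q * (q ^+ m * q ^+ m)) - 1 != 0.
  by move: hZ; rewrite exprS -addnn exprD -oppr_eq0 opprB.
have hab' : 1 + -1 * (a * b) != 0 by rewrite mulN1r -oppr_eq0 opprD opprK addrC.
rewrite exprS in h1.
have h1' : a * b * (q * q ^+ m) - 1 != 0 by rewrite -oppr_eq0 opprB.
have h2' : a * b * c * d * q ^+ m - 1 != 0 by rewrite -oppr_eq0 opprB.
have h0 : 1 - a * b != 0 by rewrite -oppr_eq0 opprB.
by field; fz.
Qed.

Lemma inner_coef i (a b c d q : C) : a != 0 -> b != 0 -> c != 0 -> d != 0 -> q != 0 ->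
  1 - a * b * q ^+ i.+1 != 0 -> 1 - a * b * c * d * q ^+ i.+1.-1 != 0 ->
  a^-1 * b^-1 * (1 - q^-1 ^+ i.+1) * (1 - c^-1 * d^-1 * q^-1 ^+ i.+1.-1)
  / ((1 - a^-1 * b^-1 * q^-1 ^+ i.+1) * (1 - a^-1 * b^-1 * c^-1 * d^-1 * q^-1 ^+ i.+1.-1))
  = a * b * (1 - q ^+ i.+1) * (1 - c * d * q ^+ i.+1.-1)
    / ((1 - a * b * q ^+ i.+1) * (1 - a * b * c * d * q ^+ i.+1.-1)).
Proof.
move=> ha hb hc hd hq h1 h2; rewrite /= in h2 *.
rewrite !exprVn !exprS in h1 *.
have hqm : q ^+ i != 0 by nz.
have h1' : a * b * (q * q ^+ i) - 1 != 0 by rewrite -oppr_eq0 opprB.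
have h2' : a * b * c * d * q ^+ i - 1 != 0 by rewrite -oppr_eq0 opprB.
by field; fz.
Qed.

Lemma scal_top n (a b c d q : C) : a != 0 -> b != 0 -> c != 0 -> d != 0 -> q != 0 ->
  a * b * q ^+ n.+1 = 1 ->
  qpoch (a^-1 * b^-1 * c^-1 * d^-1) q^-1 (2 * n.+1).-1
  / (a^-1 ^+ n.+1 * (qpoch q^-1 q^-1 n.+1 * qpoch (b^-1 * c^-1) q^-1 n.+1
       * qpoch (b^-1 * d^-1) q^-1 n.+1 * qpoch (c^-1 * d^-1) q^-1 n.+1.-1))
  = qpoch (a * b * c * d) q (2 * n.+1).-1
    / (a ^+ n.+1 * (qpoch q q n.+1 * qpoch (b * c) q n.+1 * qpoch (b * d) q n.+1
                 * qpoch (c * d) q n.+1.-1)).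
Proof.
move=> ha hb hc hd hq hab.
have e2 : ((2 * n.+1).-1 = n.*2.+1)%N by rewrite -mul2n mulnS.
rewrite e2 /=.
have e1 : forall u v : C, u^-1 * v^-1 = (u * v)^-1 by move=> u v; rewrite invfM.
rewrite !e1 !qpochV; try by nz.
have hC : q ^+ 'C(n.*2.+1, 2) = (q ^+ 'C(n, 2)) ^+ 4 * (q ^+ n) ^+ 3.
  by rewrite -!exprM -exprD binT; congr (_ ^+ _); lia.
rewrite hC binS2 exprD.
rewrite !invfM.
set w1 := (qpoch q q n.+1)^-1.
set w2 := (qpoch (b * c) q n.+1)^-1.
set w3 := (qpoch (b * d) q n.+1)^-1.
set w4 := (qpoch (c * d) q n)^-1.
set Z := qpoch (a * b * c * d) q n.*2.+1.
have hb' : b = (a * q ^+ n.+1)^-1 by rewrite -[X in _ = X]mulr1 -hab; field; fz.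
rewrite !exprS -!addnn !exprD sgnsq !exprMn !exprVn.
rewrite exprS in hb'.
rewrite hb'.
set L := (X in X = _).
rewrite -(mulr1 L) -[L * 1](congr1 (fun z => L * z) (sgnsq n)).
rewrite -(mulr1 (L * _)) -[L * _ * 1](congr1 (fun z => L * ((-1) ^+ n * (-1) ^+ n) * z) (sgnsq n)) /L.
have ht : q ^+ 'C(n, 2) != 0 by nz.
have hs : (-1) ^+ n != 0 :> C by nz.
have hqm : q ^+ n != 0 by nz.
by field; fz.
Qed.

Lemma scal_top' D (a b c d q : C) : (0 < D)%N -> a != 0 -> b != 0 -> c != 0 -> d != 0 -> q != 0 ->
  a * b * q ^+ D = 1 ->
  qpoch (a^-1 * b^-1 * c^-1 * d^-1) q^-1 (2 * D).-1
  / (a^-1 ^+ D * (qpoch q^-1 q^-1 D * qpoch (b^-1 * c^-1) q^-1 D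
       * qpoch (b^-1 * d^-1) q^-1 D * qpoch (c^-1 * d^-1) q^-1 D.-1))
  = qpoch (a * b * c * d) q (2 * D).-1
    / (a ^+ D * (qpoch q q D * qpoch (b * c) q D * qpoch (b * d) q D
                 * qpoch (c * d) q D.-1)).
Proof. by case: D => [//|n] _; exact: scal_top. Qed.

Lemma gen_eq i y (a b c d q : C) : (0 < i)%N -> a != 0 -> b != 0 -> c != 0 -> d != 0 -> q != 0 ->
  y != 0 ->
  a * b - 1 != 0 ->
  1 - a * b * c * d * q ^+ (2 * i).-1 != 0 ->
  1 - a * b * q ^+ i != 0 ->
  1 - a * b * c * d * q ^+ i.-1 != 0 ->
  let fac := qpoch (a * b * c * d) q (2 * i).-1
    / (a ^+ i * (qpoch q q i * qpoch (b * c) q i * qpoch (b * d) q i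
                 * qpoch (c * d) q i)) in
  let Qi := a^-1 * b^-1 * y^-1 * (1 - a * y) * (1 - b * y) * Pw i.-1 y (a * q) (b * q) c d q in
  eplus_gen i y a^-1 b^-1 c^-1 d^-1 q^-1
   = a * b * (1 - q ^+ i) * (1 - c * d * q ^+ i.-1) / (a * b - 1)
         * fac * (Pw i y a b c d q - Qi)
  /\
  eminus_gen i y a^-1 b^-1 c^-1 d^-1 q^-1
       = (1 - a * b * q ^+ i) * (1 - a * b * c * d * q ^+ i.-1) / (1 - a * b)
         * fac
         * (Pw i y a b c d q - a * b * (1 - q ^+ i) * (1 - c * d * q ^+ i.-1)
                     / ((1 - a * b * q ^+ i) * (1 - a * b * c * d * q ^+ i.-1))
                     * Qi).
Proof.
case: i => [//|m] _ ha hb hc hd hq hy h1 h2 h3 h4 fac Qi.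
rewrite /eplus_gen /eminus_gen PwV // RtermV //.
rewrite scal_gen // scal_genm // inner_coef //.
Qed.
Theorem proposition10p7
  (D : nat) (q s ss r1 r2 q12 s12 ss12 r112 r212 : C)
  (hD : (3 <= D)%N)
  (hq0 : q != 0)
  (hq_nonroot : forall n : nat, (0 < n)%N -> q ^+ n != 1)
  (hs0 : s != 0) (hss0 : ss != 0) (hr10 : r1 != 0) (hr20 : r2 != 0)
  (hr1r2 : r1 * r2 = s * ss * q ^+ D.+1)
  (hnd : forall i : nat, (1 <= i <= D)%N ->
     [/\ q ^+ i != 1, r1 * q ^+ i != 1, r2 * q ^+ i != 1,
         ss * q ^+ i / r1 != 1 & ss * q ^+ i / r2 != 1])
  (hnd2 : forall i : nat, (2 <= i <= 2 * D)%N ->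
     s * q ^+ i != 1 /\ ss * q ^+ i != 1)
  (hq12 : q12 ^+ 2 = q) (hs12 : s12 ^+ 2 = s) (hss12 : ss12 ^+ 2 = ss)
  (hr112 : r112 ^+ 2 = r1) (hr212 : r212 ^+ 2 = r2)
  (hsqrt : r112 * r212 = s12 * ss12 * q12 ^+ D.+1) :
  let a := r112 * r212 / (ss12 * q12 ^+ D) in
  let b := ss12 / (r112 * r212 * q12 ^+ D) in
  let c := r212 * ss12 * q12 ^+ D.+2 / r112 in
  let d := r112 * ss12 * q12 ^+ D.+2 / r212 in
  let Pi := fun (i : nat) (y : C) => Pw i y a b c d q in
  let Qi := fun (i : nat) (y : C) =>
    a^-1 * b^-1 * y^-1 * (1 - a * y) * (1 - b * y) * Pw i.-1 y (a * q) (b * q) c d q in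
  let fac := fun (i : nat) =>
    qpoch (a * b * c * d) q (2 * i).-1
    / (a ^+ i * (qpoch q q i * qpoch (b * c) q i * qpoch (b * d) q i
                 * qpoch (c * d) q i)) in
  (forall (i : nat) (y : C), (1 <= i <= D.-1)%N -> y != 0 ->
     eplus D i.-1 y a^-1 b^-1 c^-1 d^-1 q^-1
       = a * b * (1 - q ^+ i) * (1 - c * d * q ^+ i.-1) / (a * b - 1)
         * fac i * (Pi i y - Qi i y)
     /\
     eminus i y a^-1 b^-1 c^-1 d^-1 q^-1
       = (1 - a * b * q ^+ i) * (1 - a * b * c * d * q ^+ i.-1) / (1 - a * b)
         * fac i
         * (Pi i y - a * b * (1 - q ^+ i) * (1 - c * d * q ^+ i.-1)
                     / ((1 - a * b * q ^+ i) * (1 - a * b * c * d * q ^+ i.-1))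
                     * Qi i y))
  /\
  (forall y : C, y != 0 ->
     eminus 0 y a^-1 b^-1 c^-1 d^-1 q^-1 = 1
     /\
     eplus D D.-1 y a^-1 b^-1 c^-1 d^-1 q^-1
       = qpoch (a * b * c * d) q (2 * D).-1
         / (a ^+ D * (qpoch q q D * qpoch (b * c) q D * qpoch (b * d) q D
                      * qpoch (c * d) q D.-1))
         * Pi D y).
Proof.
move=> a b c d Pi Qi fac.
rewrite /Pi /Qi /fac.
have nq12 : q12 != 0 by move: hq0; rewrite -hq12; apply: contraNneq => ->; rewrite expr0n.
have nss12 : ss12 != 0 by move: hss0; rewrite -hss12; apply: contraNneq => ->; rewrite expr0n.
have nr112 : r112 != 0 by move: hr10; rewrite -hr112; apply: contraNneq => ->; rewrite expr0n.
have nr212 : r212 != 0 by move: hr20; rewrite -hr212; apply: contraNneq => ->; rewrite expr0n.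
have ha : a != 0 by rewrite /a; nz.
have hb : b != 0 by rewrite /b; nz.
have hc : c != 0 by rewrite /c; nz.
have hd : d != 0 by rewrite /d; nz.
have hab : a * b * q ^+ D = 1.
  rewrite /a /b -hq12 -exprM mulnC exprM.
  have : q12 ^+ D != 0 by nz.
  by move=> h; field; fz.
have habcd : a * b * c * d = ss * q ^+ 2.
  rewrite /a /b /c /d -hss12 -hq12 !exprS.
  have : q12 ^+ D != 0 by nz.
  by move=> h; field; fz.
clearbody a b c d.
have hab1 : a * b - 1 != 0.
  apply/negP; rewrite subr_eq0 => /eqP h.
  move: hab; rewrite h mul1r => /eqP; apply/negP; apply: hq_nonroot.
  by apply: leq_trans hD.
split.
  move=> i y /andP [hi1 hi2] hy.
  have hiD : (i < D)%N by move: hi2 hD; clear; lia.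
  have hi0 : (0 < i)%N by move: hi1; clear; lia.
  have h3 : 1 - a * b * q ^+ i != 0.
    apply/negP; rewrite subr_eq0 => /eqP h.
    move: hab; rewrite -(subnKC (ltnW hiD)) exprD mulrA -h mul1r.
    move/eqP; apply/negP; apply: hq_nonroot; by rewrite subn_gt0.
  have h4 : 1 - a * b * c * d * q ^+ i.-1 != 0.
    rewrite habcd -mulrA -exprD subr_eq0 eq_sym.
    have hh : (2 <= 2 + i.-1 <= 2 * D)%N by move: hiD; clear; lia.
    by case: (hnd2 _ hh).
  have h2 : 1 - a * b * c * d * q ^+ (2 * i).-1 != 0.
    rewrite habcd -mulrA -exprD subr_eq0 eq_sym.
    have hh : (2 <= 2 + (2 * i).-1 <= 2 * D)%N by move: hiD; clear; lia.
    by case: (hnd2 _ hh).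
  have [E1 E2] := gen_eq i y a b c d q hi0 ha hb hc hd hq0 hy hab1 h2 h3 h4.
  rewrite /eplus /eminus prednK // (ltn_eqF hiD).
  have -> : (i == 0%N) = false by move: hi0; clear; lia.
  by split.
move=> y hy; split; first by [].
rewrite /eplus prednK ?eqxx; last by move: hD; clear; lia.
rewrite /eplus_top PwV // scal_top' //; move: hD; clear; lia.
Qed.
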